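(* Let $X\in\mathcal{P}^N$ and $\lambda\in\mathbb{C}^N$. (i) The integral $$\psi_\lambda(X)=\int_{\mathcal{T}(X)}e_\lambda(Y)\,e^{-\mathcal{F}(Y)}\prod_{1\le m<N}\mu_m(dY^m)$$ converges. (ii) The integrand $e_\lambda(Y)e^{-\mathcal{F}(Y)}$ vanishes as $Y\to\partial\mathcal{T}(X)$.
   Context: $\mathcal{P}$ is the space of positive definite $n\times n$ real symmetric matrices; $|X|=\det X$; $\mu(dX)=|X|^{-(n+1)/2}\prod_{1\le i\le j\le n}dx_{ij}$ and $\mu_m=\mu^{\otimes m}$ on $\mathcal{P}^m$. For $\nu\in\mathbb{C}$ and $X=(X_1,\dots,X_k)\in\mathcal{P}^k$, $e_\nu(X)=\prod_{i=1}^k|X_i|^{\nu}$. Let $\mathcal{T}=\mathcal{P}\times\mathcal{P}^2\times\cdots\times\mathcal{P}^N$, with elements $Y=(Y^1,\dots,Y^N)$, $Y^m=(Y^m_1,\dots,Y^m_m)\in\mathcal{P}^m$; for $X\in\mathcal{P}^N$, $\mathcal{T}(X)=\{Y\in\mathcal{T}:Y^N=X\}$, identified with $\mathcal{P}\times\cdots\times\mathcal{P}^{N-1}$. For $Y\in\mathcal{T}$, $\mathcal{F}(Y)=\sum_{1\le i\le m<N}\big(\mathrm{tr}[Y^m_i(Y^{m+1}_i)^{-1}]+\mathrm{tr}[Y^{m+1}_{i+1}(Y^m_i)^{-1}]\big)$, and for $\lambda\in\mathbb{C}^N$, $e_\lambda(Y)=e_{\lambda_1}(Y^1)\prod_{2\le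 m\le N}e_{\lambda_m}(Y^m)\,e_{-\lambda_m}(Y^{m-1})$. *)

(* Defs.v *)
From HB Require Import structures.
From mathcomp Require Import all_boot all_order all_algebra.
From mathcomp Require Import all_classical all_reals all_analysis.
From mathcomp Require Import complex.

Set Implicit Arguments.
Unset Strict Implicit.
Unset Printing Implicit Defensive.

Import Order.TTheory GRing.Theory Num.Theory.
Import numFieldNormedType.Exports.
Local Open Scope ring_scope.

Section GT.
Variable R : realType.

Definition posdef (n : nat) (A : 'M[R]_n) : Prop :=
  A^T = A /\ forall x : 'rV[R]_n, x != 0 -> 0 < (x *m A *m x^T) 0 0.

(* Complex power x^nu := exp(nu log x) for x > 0 (principal branch). *)
Local Open Scope complex_scope.
Definition cpow (x : R) (nu : R[i]) : R[i] :=
  (expR (complex.Re nu * ln x) * cos (complex.Im nu * ln x)) +i*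
  (expR (complex.Re nu * ln x) * sin (complex.Im nu * ln x)).
Local Close Scope complex_scope.

(* Iterated Lebesgue integral over R^J (J a finite index type) of a        *)
(* nonnegative extended-real function: integrate coordinate by coordinate  *)
(* in the order of enum J.  For nonnegative measurable functions this is   *)
(* the Lebesgue integral w.r.t. Lebesgue measure on R^J (Tonelli).         *)
Fixpoint iterint (J : eqType) (s : seq J) (f : (J -> R) -> \bar R)
    (v : J -> R) : \bar R :=
  match s with
  | [::] => f v
  | j :: s' => (\int[@lebesgue_measure R]_(x in [set: R])
                  iterint s' f (fun k => if k == j then x else v k))%E
  end.

Definition lebesgue_integral_fin (J : finType) (f : (J -> R) -> \bar R) :
  \bar R := iterint (enum J) f (fun _ => 0).

(* Coordinates on T(X) = P x P^2 x ... x P^(N-1).                           *)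
(* A free vertex Y^m_i (1 <= i <= m < N) is indexed by the pair             *)
(* (m-1, i-1) of ordinals in 'I_N with i-1 <= m-1 and m < N.               *)
Definition LvIdx (N : nat) :=
  {p : 'I_N * 'I_N | (p.2 <= p.1)%N && (p.1.+1 < N)%N}.
Definition EIdx (n : nat) := {q : 'I_n * 'I_n | (q.1 <= q.2)%N}.
(* A point of T(X) is given by the upper-triangular entries x_ab (a <= b)  *)
(* of all the matrices Y^m_i, 1 <= i <= m < N.                             *)
Definition gtcoord (N n : nat) := (LvIdx N * EIdx n)%type.

Lemma sidx_proof (n : nat) (a b : 'I_n) : (a <= b)%N = false -> (b <= a)%N.
Proof. by move=> h; apply: ltnW; rewrite ltnNge h. Qed.

Definition sidx (n : nat) (a b : 'I_n) : EIdx n :=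
  match (a <= b)%N as c return (a <= b)%N = c -> EIdx n with
  | true => fun h => exist _ (a, b) h
  | false => fun h => exist (fun q : 'I_n * 'I_n => (q.1 <= q.2)%N)
                        (b, a) (sidx_proof h)
  end erefl.

Variables (N n : nat).

Definition Ymat (w : gtcoord N n -> R) (k : LvIdx N) : 'M[R]_n :=
  \matrix_(a, b) w (k, sidx a b).

Definition inT (w : gtcoord N n -> R) : Prop := forall k, posdef (Ymat w k).

(* Vertex Y^m_i of the whole pattern (1-based m, i), with Y^N = X.          *)
Definition node (X : 'I_N -> 'M[R]_n) (w : gtcoord N n -> R) (m i : nat) :
    'M[R]_n :=
  if m == N then
    (if (insub i.-1 : option 'I_N) is Some j then X j else 0)
  else
    match (insub m.-1 : option 'I_N), (insub i.-1 : option 'I_N) with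
    | Some m', Some i' =>
        if (insub (m', i') : option (LvIdx N)) is Some k then Ymat w k else 0
    | _, _ => 0
    end.

Definition energy (X : 'I_N -> 'M[R]_n) (w : gtcoord N n -> R) : R :=
  \sum_(1 <= m < N) \sum_(1 <= i < m.+1)
     (\tr (node X w m i *m invmx (node X w m.+1 i))
      + \tr (node X w m.+1 i.+1 *m invmx (node X w m i))).

Definition e_level (X : 'I_N -> 'M[R]_n) (w : gtcoord N n -> R) (m : nat)
    (nu : R[i]) : R[i] :=
  \prod_(1 <= i < m.+1) cpow (\det (node X w m i)) nu.

Definition lamn (lam : 'I_N -> R[i]) (m : nat) : R[i] :=
  if (insub m.-1 : option 'I_N) is Some j then lam j else 0.

Definition e_lambda (X : 'I_N -> 'M[R]_n) (lam : 'I_N -> R[i])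
    (w : gtcoord N n -> R) : R[i] :=
  e_level X w 1 (lamn lam 1) *
  \prod_(2 <= m < N.+1)
     (e_level X w m (lamn lam m) * e_level X w m.-1 (- lamn lam m)).

Definition gt_integrand (X : 'I_N -> 'M[R]_n) (lam : 'I_N -> R[i])
    (w : gtcoord N n -> R) : R[i] :=
  e_lambda X lam w * Complex (expR (- energy X w)) 0.

(* density of prod_{m<N} mu_m w.r.t. Lebesgue measure on the coordinates *)
Definition mu_density (w : gtcoord N n -> R) : R :=
  \prod_(k : LvIdx N) (\det (Ymat w k)) `^ (- ((n%:R + 1) / 2)).

Definition abs_integrand (X : 'I_N -> 'M[R]_n) (lam : 'I_N -> R[i])
    (w : gtcoord N n -> R) : R :=
  if `[< inT w >] then
    ComplexField.Normc.normc (gt_integrand X lam w) * mu_density w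
  else 0.

End GT.

Definition gtspace (R : realType) (N n : nat) : topologicalType :=
  @prod_topology (gtcoord N n) (fun _ => (R : topologicalType)).

(* Main.v *)
Require Import Defs.
From HB Require Import structures.
From mathcomp Require Import all_boot all_order all_algebra.
From mathcomp Require Import all_classical all_reals all_analysis.
From mathcomp Require Import complex.
From mathcomp Require Import ring lra.
From mathcomp Require Import measurable_realfun.
From mathcomp Require Import perm.

Set Implicit Arguments. Unset Strict Implicit. Unset Printing Implicit Defensive.
Import Order.TTheory GRing.Theory Num.Theory.
Import numFieldNormedType.Exports.
Local Open Scope ring_scope.

Section Mat.
Variable R : realType.
Variable n : nat.
Implicit Types A B C : 'M[R]_n.
Implicit Types x y u : 'rV[R]_n.

Definition bil A x y := (x *m A *m y^T) 0 0.
Definition nrm2 x := (x *m x^T) 0 0.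
Definition psd A := A^T = A /\ forall x, 0 <= bil A x x.

Lemma mx11_tr (M : 'M[R]_1) : M^T 0 0 = M 0 0.
Proof. by rewrite mxE. Qed.

Lemma bil_sym A x y : A^T = A -> bil A x y = bil A y x.
Proof.
move=> sA; rewrite /bil -mx11_tr !trmx_mul trmxK sA mulmxA //.
Qed.

Lemma bilDl A x y z : bil A (x + y) z = bil A x z + bil A y z.
Proof. by rewrite /bil !mulmxDl mxE. Qed.

Lemma bilZl A t x z : bil A (t *: x) z = t * bil A x z.
Proof. by rewrite /bil -!scalemxAl mxE. Qed.

Lemma bilDr A x y z : bil A z (x + y) = bil A z x + bil A z y.
Proof. by rewrite /bil linearD /= mulmxDr mxE. Qed.

Lemma bilZr A t x z : bil A z (t *: x) = t * bil A z x.
Proof. by rewrite /bil linearZ /= -scalemxAr mxE. Qed.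

Lemma bil_expand A x y t : A^T = A ->
  bil A (x + t *: y) (x + t *: y) =
  bil A x x + 2 * t * bil A x y + t ^+ 2 * bil A y y.
Proof.
move=> sA; rewrite bilDl !bilDr !bilZl !bilZr (bil_sym x y sA); ring.
Qed.

Lemma CS A x y : psd A -> bil A x y ^+ 2 <= bil A x x * bil A y y.
Proof.
move=> [sA pA].
set p := bil A x x; set q := bil A y y; set b := bil A x y.
have H t : 0 <= p + 2 * t * b + t ^+ 2 * q.
  by rewrite -bil_expand //; apply: pA.
have q0 : 0 <= q by apply: pA.
have p0 : 0 <= p by apply: pA.
have [qe|qp] := eqVneq q 0.
  rewrite qe mulr0.
  have [be|bn] := eqVneq b 0; first by rewrite be expr0n.
  have := H (- (p + 1) / (2 * b)).
  rewrite qe mulr0 addr0.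
  have -> : 2 * (- (p + 1) / (2 * b)) * b = - (p + 1) by field; rewrite bn.
  lra.
have qpos : 0 < q by rewrite lt_def qp q0.
have := H (- b / q).
have -> : p + 2 * (- b / q) * b + (- b / q) ^+ 2 * q = (p * q - b ^+ 2) / q.
  by field; rewrite qp.
rewrite pmulr_lge0 ?invr_gt0 // subr_ge0 mulrC //.
Qed.


Lemma bilBm A1 A2 x y : bil (A1 - A2) x y = bil A1 x y - bil A2 x y.
Proof. by rewrite /bil mulmxBr mulmxBl !mxE. Qed.

Lemma bilDm A1 A2 x y : bil (A1 + A2) x y = bil A1 x y + bil A2 x y.
Proof. by rewrite /bil mulmxDr mulmxDl !mxE. Qed.

Lemma bil_delta A i j : bil A (delta_mx 0 i) (delta_mx 0 j) = A i j.
Proof. by rewrite /bil -rowE trmx_delta -colE !mxE. Qed.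

Lemma mx11_mul (a b : 'M[R]_1) : (a *m b) 0 0 = a 0 0 * b 0 0.
Proof. by rewrite mxE big_ord1. Qed.

Lemma bil_outer (u : 'rV[R]_n) x : bil (u^T *m u) x x = ((x *m u^T) 0 0) ^+ 2.
Proof.
rewrite /bil.
have -> : x *m (u^T *m u) *m x^T = (x *m u^T) *m (u *m x^T) by rewrite !mulmxA.
rewrite mx11_mul expr2; congr (_ * _).
by rewrite -mx11_tr trmx_mul trmxK.
Qed.

Lemma psd_diag A i : psd A -> 0 <= A i i.
Proof. by move=> [_ pA]; rewrite -bil_delta pA. Qed.

Lemma decomp_loop A : psd A -> forall r, (r <= n)%N ->
  exists (V B : 'M[R]_n), [/\ psd B, (forall i j : 'I_n, (i < r)%N -> B i j = 0),
    (forall k i : 'I_n, (r <= k)%N -> V k i = 0) & A = B + V^T *m V].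
Proof.
move=> pA; elim=> [|r IH] rn.
  exists 0, A; split => //; [by move=> *; rewrite mxE | by rewrite mulmx0 addr0].
have [V [B [pB B0 V0 AE]]] := IH (ltnW rn).
set ro : 'I_n := Ordinal rn.
have [sB qB] := pB.
have Bsym i j : B i j = B j i by rewrite -[in LHS]sB mxE.
set p := B ro ro.
have p0 : 0 <= p by apply: psd_diag.
have [pe|pn] := eqVneq p 0.
  have Br j : B ro j = 0.
    have := CS (delta_mx 0 ro) (delta_mx 0 j) pB.
    rewrite !bil_delta -/p pe mul0r => h.
    by apply/eqP; rewrite -sqrf_eq0 eq_le h sqr_ge0.
  exists V, B; split => //.
  - move=> i j; rewrite ltnS leq_eqVlt => /orP[/eqP ie|]; last exact: B0.
    by have -> : i = ro by apply: val_inj. 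
  - by move=> k i rk; apply: V0; apply: ltnW.
have pp : 0 < p by rewrite lt_def pn p0.
set s := Num.sqrt p.
have s2 : s ^+ 2 = p by rewrite sqr_sqrtr.
have sn : s != 0 by rewrite sqrtr_eq0 -ltNge.
set u : 'rV[R]_n := s^-1 *: row ro B.
set D : 'M[R]_n := delta_mx ro 0 *m u.
have uE i : u 0 i = s^-1 * B ro i by rewrite !mxE.
have utu i j : (u^T *m u) i j = u 0 i * u 0 j by rewrite mxE big_ord1 mxE.
exists (V + D), (B - u^T *m u); split.
- split.
    by rewrite linearB /= sB trmx_mul trmxK.
  move=> x; rewrite bilBm bil_outer subr_ge0.
  have -> : (x *m u^T) 0 0 = s^-1 * bil B x (delta_mx 0 ro).
    rewrite /bil linearZ /= -scalemxAr mxE; congr (_ * _).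
    by rewrite rowE trmx_mul trmx_delta sB mulmxA.
  rewrite exprMn exprVn ler_pdivrMl; last by rewrite s2.
  have := CS x (delta_mx 0 ro) pB; rewrite bil_delta -/p -s2 => h.
  by rewrite mulrC.
- move=> i j; rewrite ltnS leq_eqVlt => /orP[/eqP ie|ir].
    have -> : i = ro by apply: val_inj.
    rewrite !mxE big_ord1 !mxE.
    have e1 : s^-1 * p * s^-1 = 1 by rewrite -s2; field.
    transitivity (B ro j * (1 - s^-1 * p * s^-1)); first by rewrite /p; ring.
    by rewrite e1 subrr mulr0.
  rewrite !mxE big_ord1 !mxE (Bsym ro i) (B0 i ro) // (B0 i j) //.
  by rewrite mulr0 mul0r oppr0 addr0.
- move=> k i rk; rewrite !mxE big_ord1 !mxE V0 ?(ltnW rk) // add0r.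
  have -> : (k == ro) = false.
    by apply/negbTE; apply/eqP => ke; move: rk; rewrite ke /= ltnn.
  by rewrite mul0r.
- have VD : V^T *m D = 0.
    rewrite /D mulmxA -colE; apply/matrixP => i j; rewrite !mxE.
    by rewrite big_ord1 !mxE V0 // mul0r.
  have DV : D^T *m V = 0 by rewrite -[V]trmxK -trmx_mul VD trmx0.
  have DD : D^T *m D = u^T *m u.
    have d1 : (delta_mx 0 0 : 'M[R]_1) = 1%:M.
      by apply/matrixP => i j; rewrite !mxE !ord1.
    by rewrite /D trmx_mul trmx_delta -mulmxA (mulmxA (delta_mx 0 ro)) mul_delta_mx d1 mul1mx.
  have -> : (V + D)^T = V^T + D^T by apply/matrixP => i j; rewrite !mxE.
  rewrite AE mulmxDl !mulmxDr VD DV DD addr0 add0r.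
  by rewrite [_ *m V + _]addrC addrA subrK.
Qed.

Lemma decomp A : psd A -> exists V : 'M[R]_n, A = V^T *m V.
Proof.
move=> pA; have [V [B [_ B0 _ AE]]] := decomp_loop pA (leqnn n).
exists V; rewrite AE; suff -> : B = 0 by rewrite add0r.
by apply/matrixP => i j; rewrite B0 ?mxE.
Qed.


Lemma nrm2E x : nrm2 x = bil 1%:M x x.
Proof. by rewrite /nrm2 /bil mulmx1. Qed.

Lemma nrm2_sum x : nrm2 x = \sum_i x 0 i ^+ 2.
Proof. by rewrite /nrm2 mxE; apply: eq_bigr => i _; rewrite mxE expr2. Qed.

Lemma nrm2_ge0 x : 0 <= nrm2 x.
Proof. by rewrite nrm2_sum; apply: sumr_ge0 => i _; apply: sqr_ge0. Qed.

Lemma psd1 : psd 1%:M.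
Proof. by split; [rewrite trmx1 | move=> x; rewrite -nrm2E nrm2_ge0]. Qed.

Lemma bil_mulV C (V : 'M[R]_n) x y :
  bil C (x *m V) (y *m V) = bil (V *m C *m V^T) x y.
Proof. by rewrite /bil trmx_mul !mulmxA. Qed.

Lemma tr_VVC (V : 'M[R]_n) C :
  \tr (V^T *m V *m C) = \sum_k bil C (row k V) (row k V).
Proof.
rewrite -mulmxA mxtrace_mulC /mxtrace; apply: eq_bigr => k _.
by rewrite !rowE bil_mulV bil_delta.
Qed.

Lemma tr_VV (V : 'M[R]_n) : \tr (V^T *m V) = \sum_k nrm2 (row k V).
Proof.
by rewrite -[V^T *m V]mulmx1 tr_VVC; apply: eq_bigr => k _; rewrite nrm2E.
Qed.

Lemma psd_tr_ge0 A : psd A -> 0 <= \tr A.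
Proof. by move=> pA; apply: sumr_ge0 => i _; apply: psd_diag. Qed.

Lemma bil_VV (V : 'M[R]_n) x : bil (V^T *m V) x x = nrm2 (x *m V^T).
Proof. by rewrite /bil /nrm2 trmx_mul trmxK !mulmxA. Qed.

Lemma bil_le_tr B x : psd B -> bil B x x <= \tr B * nrm2 x.
Proof.
move=> pB; have [W ->] := decomp pB.
rewrite bil_VV tr_VV nrm2_sum mulr_suml; apply: ler_sum => k _.
have -> : (x *m W^T) 0 k = bil 1%:M x (row k W).
  by rewrite /bil mulmx1 !mxE; apply: eq_bigr => i _; rewrite !mxE.
by rewrite mulrC !nrm2E; apply: CS; apply: psd1.
Qed.

Lemma pd_psd A : posdef A -> psd A.
Proof.
move=> [sA pA]; split => // x.
have [->|xn] := eqVneq x 0; first by rewrite /bil !mul0mx mxE.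
exact: ltW (pA x xn).
Qed.

Lemma pd_unit A : posdef A -> A \in unitmx.
Proof.
move=> [sA pA]; rewrite unitmxE unitfE; apply/negP => /det0P [v vn vA].
by have := pA v vn; rewrite vA mul0mx mxE ltxx.
Qed.

Lemma psd_inv A : psd A -> A \in unitmx -> psd (invmx A).
Proof.
move=> [sA pA] uA; split; first by rewrite trmx_inv sA.
move=> x; have := pA (x *m invmx A).
rewrite /bil trmx_mul trmx_inv sA !mulmxA mulmxKV //.
Qed.

Lemma pd_inv A : posdef A -> posdef (invmx A).
Proof.
move=> pdA; have uA := pd_unit pdA; have [sA pA] := pdA.
split; first by rewrite trmx_inv sA.
move=> x xn; have xn' : x *m invmx A != 0.
  by apply: contraNneq xn => h; rewrite -(mulmxKV uA x) h mul0mx.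
have := pA _ xn'.
rewrite trmx_mul trmx_inv sA !mulmxA mulmxKV //.
Qed.

Lemma keyquad B x : psd B -> B \in unitmx ->
  nrm2 x <= \tr B * bil (invmx B) x x.
Proof.
move=> pB uB; have pC := psd_inv pB uB; have [sB _] := pB.
have := CS x (x *m B) pC.
have -> : bil (invmx B) x (x *m B) = nrm2 x.
  by rewrite /bil /nrm2 trmx_mul sB mulmxA -(mulmxA x) mulVmx // mulmx1.
have -> : bil (invmx B) (x *m B) (x *m B) = bil B x x.
  by rewrite bil_mulV mulmxV // mul1mx sB.
move=> h.
have t0 := psd_tr_ge0 pB.
have q0 : 0 <= bil (invmx B) x x by case: pC.
have [e|nz] := eqVneq (nrm2 x) 0; first by rewrite e mulr_ge0.
have np : 0 < nrm2 x by rewrite lt_def nz nrm2_ge0.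
have h2 := bil_le_tr x pB.
have : nrm2 x ^+ 2 <= bil (invmx B) x x * (\tr B * nrm2 x).
  by apply: le_trans h _; apply: ler_wpM2l.
rewrite expr2 mulrA [_ * \tr B]mulrC ler_pM2r //.
Qed.

Lemma tr_ge0 A C : psd A -> psd C -> 0 <= \tr (A *m C).
Proof.
move=> pA [_ pC]; have [V ->] := decomp pA.
by rewrite tr_VVC; apply: sumr_ge0 => k _; apply: pC.
Qed.

Lemma tr_lower A B : psd A -> psd B -> B \in unitmx ->
  \tr A <= \tr (A *m invmx B) * \tr B.
Proof.
move=> pA pB uB; have [V ->] := decomp pA.
rewrite tr_VV tr_VVC mulr_suml; apply: ler_sum => k _.
by rewrite mulrC; apply: keyquad.
Qed.

Lemma tr_lower2 A B : psd A -> A \in unitmx -> psd B -> B \in unitmx ->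
  \tr (invmx B) <= \tr (A *m invmx B) * \tr (invmx A).
Proof.
move=> pA uA pB uB.
have := tr_lower (psd_inv pB uB) (psd_inv pA uA) (etrans (unitmx_inv A) uA).
by rewrite invmxK mxtrace_mulC.
Qed.


Lemma diag_le_tr A i : psd A -> A i i <= \tr A.
Proof.
move=> pA; rewrite /mxtrace (bigD1 i) //= lerDl.
by apply: sumr_ge0 => j _; apply: psd_diag.
Qed.

Lemma entry_le_tr A i j : psd A -> `|A i j| <= \tr A.
Proof.
move=> pA; have := CS (delta_mx 0 i) (delta_mx 0 j) pA; rewrite !bil_delta => h.
have hi := diag_le_tr i pA; have hj := diag_le_tr j pA.
have gi := psd_diag i pA; have gj := psd_diag j pA.
have t0 := psd_tr_ge0 pA.
have h2 : A i j ^+ 2 <= \tr A ^+ 2.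
  apply: le_trans h _; rewrite expr2; apply: ler_pM => //.
have e : `|A i j| ^+ 2 = A i j ^+ 2 by rewrite -normrX ger0_norm ?sqr_ge0.
have a0 := normr_ge0 (A i j).
rewrite -e in h2; nra.
Qed.

Definition Kn := (#|{perm 'I_n}|)%:R : R.

Lemma Kn_ge1 : 1 <= Kn.
Proof. by rewrite /Kn perm.card_Sn ler1n fact_gt0. Qed.

Lemma det_le A : psd A -> `|\det A| <= Kn * \tr A ^+ n.
Proof.
move=> pA; rewrite /determinant.
apply: le_trans (ler_norm_sum _ _ _) _.
have -> : Kn * \tr A ^+ n = \sum_(s : {perm 'I_n}) \tr A ^+ n.
  by rewrite sumr_const mulr_natl /Kn.
apply: ler_sum => s _; rewrite normrM normr_sign mul1r normr_prod.
have -> : \tr A ^+ n = \prod_(i < n) \tr A by rewrite prodr_const card_ord.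
by apply: ler_prod => i _; rewrite normr_ge0 entry_le_tr.
Qed.

Lemma det_pos A : posdef A -> 0 < \det A.
Proof.
move=> pdA; have uA := pd_unit pdA; have [V VE] := decomp (pd_psd pdA).
have dn : \det A != 0 by rewrite -unitfE -unitmxE.
rewrite lt_def dn /= VE det_mulmx det_tr -expr2; exact: sqr_ge0.
Qed.

Lemma lndet_le A M : posdef A -> \tr A <= M -> \tr (invmx A) <= M -> 1 <= M ->
  `|ln (\det A)| <= ln Kn + n%:R * ln M.
Proof.
move=> pdA tA tAi M1.
have dp := det_pos pdA; have dip := det_pos (pd_inv pdA).
have K1 := Kn_ge1; have M0 : 0 < M := lt_le_trans ltr01 M1.
have Kp : 0 < Kn := lt_le_trans ltr01 K1.
have bnd B : posdef B -> \tr B <= M -> ln (\det B) <= ln Kn + n%:R * ln M.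
  move=> pdB tB; have dB := det_pos pdB.
  have : \det B <= Kn * M ^+ n.
    apply: le_trans (ler_norm _) _; apply: le_trans (det_le (pd_psd pdB)) _.
    apply: ler_wpM2l; first exact: ltW.
    apply: lerXn2r => //; rewrite nnegrE; [exact: psd_tr_ge0 (pd_psd pdB) | exact: ltW].
  rewrite -ler_ln ?posrE ?mulr_gt0 ?exprn_gt0 // lnM ?posrE ?exprn_gt0 //.
  by rewrite lnXn // mulr_natl.
apply/ler_normlP; split; last exact: bnd.
have := bnd _ (pd_inv pdA) tAi; rewrite det_inv lnV ?posrE // lerNl.
Qed.

End Mat.


Section GT2.
Variable R : realType.
Variables (N n : nat).

Lemma sidx_val (a b : 'I_n) :
  val (sidx a b) = if (a <= b)%N then (a, b) else (b, a).
Proof.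
rewrite /sidx.
generalize (@erefl _ (a <= b)%N).
generalize (a <= b)%N at 2 3.
by case => e; rewrite /= e.
Qed.

Lemma sidx_le (e : EIdx n) : sidx (val e).1 (val e).2 = e.
Proof. by apply: val_inj; rewrite sidx_val; case: e => [[a b] /= ->]. Qed.

Lemma sidxC (a b : 'I_n) : sidx a b = sidx b a.
Proof.
apply: val_inj; rewrite !sidx_val.
case: (leqP a b) => ab; case: (leqP b a) => ba //.
  by have -> : a = b by apply: val_inj; apply/eqP; rewrite eqn_leq ab ba.
by move: (ltn_trans ab ba); rewrite ltnn.
Qed.

Lemma Ymat_sym (w : gtcoord N n -> R) k : (Ymat w k)^T = Ymat w k.
Proof. by apply/matrixP => a b; rewrite !mxE sidxC. Qed.

Lemma Ymat_coord (w : gtcoord N n -> R) (c : gtcoord N n) :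
  w c = Ymat w c.1 (val c.2).1 (val c.2).2.
Proof. by case: c => k e; rewrite mxE sidx_le. Qed.

Variable X : 'I_N -> 'M[R]_n.

Lemma node_N (w : gtcoord N n -> R) i (hi : (i.-1 < N)%N) :
  node X w N i = X (Ordinal hi).
Proof.
rewrite /node eqxx.
have -> : insub i.-1 = Some (Ordinal hi) by apply: (@insubT _ (fun x => x < N)%N).
by [].
Qed.

Lemma node_Y (w : gtcoord N n -> R) (k : LvIdx N) :
  node X w (val k).1.+1 (val k).2.+1 = Ymat w k.
Proof.
case: k => [[a b] hk] /=.
have hN : (a.+1 < N)%N by case/andP: hk.
rewrite /node ifN_eq; last by rewrite neq_ltn hN.
rewrite /= !valK.
by rewrite (insubT (fun p : 'I_N * 'I_N => (p.2 <= p.1)%N && (p.1.+1 < N)%N) hk) /=.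
Qed.


Hypothesis pdX : forall j, posdef (X j).

Lemma node_pd (w : gtcoord N n -> R) m i : inT w -> (0 < i)%N -> (i <= m)%N ->
  (m <= N)%N -> posdef (node X w m i).
Proof.
move=> Hw i0 im mN.
have hi' : (i.-1 < N)%N by rewrite prednK // (leq_trans im mN).
case: (eqVneq m N) => [me|mn].
  by rewrite me node_N; apply: pdX.
have mlt : (m < N)%N by rewrite ltn_neqAle mn mN.
have m0 : (0 < m)%N by apply: leq_trans im.
have hm : (m.-1 < N)%N by rewrite prednK.
have hk : ((Ordinal hi' : 'I_N) <= (Ordinal hm : 'I_N))%N
          && ((Ordinal hm : 'I_N).+1 < N)%N.
  by rewrite /= prednK // mlt andbT -(leq_add2r 1) !addn1 !prednK.
pose k : LvIdx N := exist _ (Ordinal hm, Ordinal hi') hk.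
by have := node_Y w k; rewrite /= !prednK // => ->; apply: Hw.
Qed.

Lemma sum_ge_term (f : nat -> R) a b j : (a <= j < b)%N ->
  (forall m, (a <= m < b)%N -> 0 <= f m) -> f j <= \sum_(a <= m < b) f m.
Proof.
move=> hj hf; rewrite (bigD1_seq j) /= ?mem_index_iota ?iota_uniq //.
rewrite lerDl; rewrite big_seq_cond; apply: sumr_ge0 => m /andP[hm _].
by apply: hf; rewrite -mem_index_iota.
Qed.

Definition t1 w m i := \tr (node X w m i *m invmx (node X w m.+1 i)).
Definition t2 w m i := \tr (node X w m.+1 i.+1 *m invmx (node X w m i)).

Lemma t_ge0 w m i : inT w -> (0 < i)%N -> (i <= m)%N -> (m < N)%N ->
  0 <= t1 w m i /\ 0 <= t2 w m i.
Proof.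
move=> Hw i0 im mN.
have p1 := node_pd Hw i0 im (ltnW mN).
have p2 := node_pd Hw i0 (leq_trans im (leqnSn m)) mN.
have p3 := @node_pd w m.+1 i.+1 Hw (ltn0Sn i) im mN.
by split; apply: tr_ge0; apply: pd_psd => //; apply: pd_inv.
Qed.

Lemma t_le_energy w m i : inT w -> (0 < i)%N -> (i <= m)%N -> (m < N)%N ->
  t1 w m i <= energy X w /\ t2 w m i <= energy X w.
Proof.
move=> Hw i0 im mN.
have inner : t1 w m i + t2 w m i <= energy X w.
  apply: le_trans (sum_ge_term (j := m) _ _) => //.
  - apply: (sum_ge_term (f := fun i => t1 w m i + t2 w m i)) => //.
      by rewrite i0 ltnS.
    move=> i' /andP[i'0 i'm]; have [h1 h2] := t_ge0 Hw i'0 (i'm : (i' <= m)%N) mN.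
    exact: addr_ge0.
  - by rewrite (leq_trans i0 im).
  - move=> m' /andP[m'0 m'N]; rewrite big_seq; apply: sumr_ge0 => i'.
    rewrite mem_index_iota => /andP[i'0 i'm].
    have [h1 h2] := t_ge0 Hw i'0 (i'm : (i' <= m')%N) m'N.
    exact: addr_ge0.
have [h1 h2] := t_ge0 Hw i0 im mN.
by split; apply: le_trans inner; rewrite ?lerDl ?lerDr.
Qed.


Definition C0 := 1 + \sum_j (\tr (X j) + \tr (invmx (X j))).
Definition Gw w := Num.max 1 (energy X w).

Lemma Gw_ge1 w : 1 <= Gw w.
Proof. by rewrite /Gw le_max lexx. Qed.

Lemma X_le_C0 j : \tr (X j) <= C0 /\ \tr (invmx (X j)) <= C0.
Proof.
have h : \tr (X j) + \tr (invmx (X j)) <= C0.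
  rewrite /C0 (bigD1 j) //=.
  have : 0 <= \sum_(k | k != j) (\tr (X k) + \tr (invmx (X k))).
    apply: sumr_ge0 => k _; apply: addr_ge0; apply: psd_tr_ge0; apply: pd_psd => //.
    exact: pd_inv.
  lra.
have h1 := psd_tr_ge0 (pd_psd (pdX j)).
have h2 := psd_tr_ge0 (pd_psd (pd_inv (pdX j))).
by split; apply: le_trans h; rewrite ?lerDl ?lerDr.
Qed.

Lemma C0_ge1 : 1 <= C0.
Proof.
rewrite /C0 lerDl; apply: sumr_ge0 => k _; apply: addr_ge0; apply: psd_tr_ge0.
  exact: pd_psd.
by apply: pd_psd; apply: pd_inv.
Qed.

Lemma chain w : inT w -> forall d m i, (m + d = N)%N -> (0 < i)%N -> (i <= m)%N ->
  \tr (node X w m i) <= C0 * Gw w ^+ d /\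
  \tr (invmx (node X w m i)) <= C0 * Gw w ^+ d.
Proof.
move=> Hw; elim=> [|d IH] m i md i0 im.
  rewrite addn0 in md; subst m.
  have hi : (i.-1 < N)%N by rewrite prednK.
  by rewrite node_N expr0 mulr1; apply: X_le_C0.
have mN : (m < N)%N by rewrite -md addnS ltnS leq_addr.
have e' : (m.+1 + d = N)%N by rewrite addSnnS.
have [IH1 _] := IH m.+1 i e' i0 (leq_trans im (leqnSn m)).
have [_ IH2] := IH m.+1 i.+1 e' (ltn0Sn i) im.
have [e1 e2] := t_le_energy Hw i0 im mN.
have [g1 g2] := t_ge0 Hw i0 im mN.
have pA := node_pd Hw i0 im (ltnW mN).
have pB := node_pd Hw i0 (leq_trans im (leqnSn m)) mN.
have pC := @node_pd w m.+1 i.+1 Hw (ltn0Sn i) im mN.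
have eG : energy X w <= Gw w by rewrite /Gw le_max lexx orbT.
rewrite exprS mulrCA; split.
- apply: le_trans (tr_lower (pd_psd pA) (pd_psd pB) (pd_unit pB)) _.
  apply: ler_pM => //; first exact: psd_tr_ge0 (pd_psd pB).
  exact: le_trans e1 eG.
- apply: le_trans (tr_lower2 (pd_psd pC) (pd_unit pC) (pd_psd pA) (pd_unit pA)) _.
  apply: ler_pM => //; first exact: psd_tr_ge0 (pd_psd (pd_inv pC)).
  exact: le_trans e2 eG.
Qed.

Definition Mw w := C0 * Gw w ^+ N.

Lemma Mw_ge1 w : 1 <= Mw w.
Proof.
rewrite /Mw -[1](mulr1 1); apply: ler_pM => //; first exact: C0_ge1.
by rewrite exprn_ege1 // Gw_ge1.
Qed.

Lemma node_bound w m i : inT w -> (0 < i)%N -> (i <= m)%N -> (m <= N)%N ->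
  \tr (node X w m i) <= Mw w /\ \tr (invmx (node X w m i)) <= Mw w.
Proof.
move=> Hw i0 im mN.
have [h1 h2] := chain Hw (subnKC mN) i0 im.
have le : C0 * Gw w ^+ (N - m) <= Mw w.
  apply: ler_wpM2l; first by apply: le_trans C0_ge1.
  by apply: ler_weXn2l; [exact: Gw_ge1 | exact: leq_subr].
by split; apply: le_trans le.
Qed.

End GT2.


Section Real.
Variable R : realType.
Local Notation normc := (@ComplexField.Normc.normc R).

Lemma normc_cpow (x : R) (nu : R[i]) : normc (cpow x nu) = expR (complex.Re nu * ln x).
Proof.
rewrite /cpow /ComplexField.Normc.normc !exprMn -mulrDr cos2Dsin2 mulr1.
by rewrite sqrtr_sqr ger0_norm // expR_ge0.
Qed.

Lemma normc_cpow_le (x : R) (nu : R[i]) (r L : R) : `|complex.Re nu| <= r ->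
  `|ln x| <= L -> normc (cpow x nu) <= expR (r * L).
Proof.
move=> hr hL; rewrite normc_cpow ler_expR.
apply: le_trans (ler_norm _) _; rewrite normrM.
by apply: ler_pM => //.
Qed.

Lemma normc_prod (I : Type) (r : seq I) (P : pred I) (F : I -> R[i]) :
  normc (\prod_(i <- r | P i) F i) = \prod_(i <- r | P i) normc (F i).
Proof.
apply: (big_morph normc); [exact: ComplexField.Normc.normcM | exact: ComplexField.Normc.normc1].
Qed.

Lemma normc_real (a : R) : 0 <= a -> normc (Complex a 0) = a.
Proof.
by move=> a0; rewrite /ComplexField.Normc.normc expr0n addr0 sqrtr_sqr ger0_norm.
Qed.

Lemma normc_ge0 (z : R[i]) : 0 <= normc z.
Proof. by case: z => a b; rewrite /ComplexField.Normc.normc sqrtr_ge0. Qed.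

Lemma prod_nat_le (f : nat -> R) a b c : (forall i, (a <= i < b)%N -> 0 <= f i <= c) ->
  \prod_(a <= i < b) f i <= c ^+ (b - a).
Proof.
move=> h; rewrite -prodr_const_nat !big_seq; apply: ler_prod => i.
by rewrite mem_index_iota; apply: h.
Qed.

Lemma exp_tail (al be F : R) : 0 <= be -> 0 <= F ->
  expR (al + be * ln (Num.max 1 F) - F) <=
  expR (al + 1 / 2 + (be + 1) * ln (2 * (be + 1)) - F / 2).
Proof.
move=> b0 F0; rewrite ler_expR.
set G := Num.max 1 F.
have G1 : 1 <= G by rewrite le_max lexx.
have G0 : 0 < G by apply: lt_le_trans G1.
have GF : G <= 1 + F by rewrite ge_max lerDl F0 /= -subr_ge0 addrK.
have LG0 : 0 <= ln G by apply: ln_ge0.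
set b' := be + 1.
have b'0 : 0 < b' by rewrite /b'; lra.
have lnsplit : ln G = ln (G / (2 * b')) + ln (2 * b').
  rewrite -lnM ?posrE ?divr_gt0 ?mulr_gt0 //; congr ln; field.
  by rewrite lt0r_neq0.
have hs : ln (G / (2 * b')) < G / (2 * b').
  by apply: ln_sublinear; rewrite divr_gt0 ?mulr_gt0.
have : b' * ln G <= G / 2 + b' * ln (2 * b').
  rewrite lnsplit mulrDr lerD2r.
  have -> : G / 2 = b' * (G / (2 * b')) by field; rewrite lt0r_neq0.
  by rewrite ler_pM2l // ltW.
have : be * ln G <= b' * ln G by rewrite ler_wpM2r // /b' lerDl.
lra.
Qed.

End Real.

Section Bnd.
Variable R : realType.
Variables (N n : nat).
Variable X : 'I_N -> 'M[R]_n.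
Variable lam : 'I_N -> R[i].
Hypothesis pdX : forall j, posdef (X j).
Local Notation normc := (@ComplexField.Normc.normc R).

Definition Lw (w : gtcoord N n -> R) := ln (@Kn R n) + n%:R * ln (Mw X w).
Definition Rl := \sum_j `|complex.Re (lam j)|.
Definition Ew w := expR (Rl * Lw w).
Definition Qn := (N + (N + N) * (N.+1 - 2))%N.

Lemma Lw_ge0 w : 0 <= Lw w.
Proof.
apply: addr_ge0; first by apply: ln_ge0; apply: Kn_ge1.
by apply: mulr_ge0 => //; apply: ln_ge0; apply: Mw_ge1.
Qed.

Lemma Rl_ge0 : 0 <= Rl.
Proof. by apply: sumr_ge0 => j _. Qed.

Lemma Ew_ge1 w : 1 <= Ew w.
Proof. by rewrite /Ew -expR0 ler_expR mulr_ge0 ?Rl_ge0 ?Lw_ge0. Qed.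

Lemma node_lndet w m i : inT w -> (0 < i)%N -> (i <= m)%N -> (m <= N)%N ->
  `|ln (\det (node X w m i))| <= Lw w.
Proof.
move=> Hw i0 im mN; have [h1 h2] := node_bound pdX Hw i0 im mN.
exact: lndet_le (node_pd pdX Hw i0 im mN) h1 h2 (Mw_ge1 pdX w).
Qed.

Lemma Re_lamn m : `|complex.Re (lamn lam m)| <= Rl /\
                  `|complex.Re (- lamn lam m)| <= Rl.
Proof.
have h : `|complex.Re (lamn lam m)| <= Rl.
  rewrite /lamn; case: insub => [j|]; last by rewrite normr0 Rl_ge0.
  by rewrite /Rl (bigD1 j) //= lerDl sumr_ge0.
split => //; move: h; case: (lamn lam m) => a b /=.
by rewrite normrN.
Qed.

Lemma e_level_bound w m nu : inT w -> (0 < m)%N -> (m <= N)%N ->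
  `|complex.Re nu| <= Rl -> normc (e_level X w m nu) <= Ew w ^+ N.
Proof.
move=> Hw m0 mN hnu; rewrite /e_level normc_prod.
apply: le_trans (_ : Ew w ^+ (m.+1 - 1) <= _).
  apply: prod_nat_le => i /andP[i0 im]; rewrite normc_ge0 /=.
  by apply: normc_cpow_le => //; apply: node_lndet.
by rewrite subn1 /=; apply: ler_weXn2l => //; apply: Ew_ge1.
Qed.

Lemma e_lambda_bound w : (0 < N)%N -> inT w -> normc (e_lambda X lam w) <= Ew w ^+ Qn.
Proof.
move=> N0 Hw; rewrite /e_lambda ComplexField.Normc.normcM normc_prod.
rewrite /Qn exprD exprM; apply: ler_pM.
- exact: normc_ge0.
- by apply: prodr_ge0 => m _; rewrite normc_ge0.
- exact: e_level_bound (Re_lamn 1).1.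
apply: prod_nat_le => m /andP[m2 mN]; rewrite normc_ge0 /=.
rewrite ComplexField.Normc.normcM addnn -mul2n mulnC exprM expr2.
have m0 : (0 < m)%N by apply: leq_trans m2.
have m1 : (0 < m.-1)%N by rewrite -ltnS prednK.
apply: ler_pM; rewrite ?normc_ge0 //.
  exact: e_level_bound (Re_lamn m).1.
apply: e_level_bound (Re_lamn m).2 => //.
by apply: leq_trans (leq_pred m) _.
Qed.


Lemma Y_bound w (k : LvIdx N) : inT w ->
  [/\ \tr (Ymat w k) <= Mw X w, \tr (invmx (Ymat w k)) <= Mw X w &
      `|ln (\det (Ymat w k))| <= Lw w].
Proof.
move=> Hw; rewrite -(node_Y X).
case: k => [[a b] /andP[ba aN]] /=.
have [h1 h2] := node_bound pdX (m := a.+1) (i := b.+1) Hw (ltn0Sn b) ba (ltnW aN).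
by split => //; apply: node_lndet => //; apply: ltnW.
Qed.

Lemma density_bound w : inT w ->
  mu_density w <= expR ((n%:R + 1) / 2 * Lw w) ^+ #|{: LvIdx N}|.
Proof.
move=> Hw; rewrite /mu_density -prodr_const; apply: ler_prod => k _.
rewrite powR_ge0 /=.
have dp := det_pos (Hw k); have [_ _ hl] := Y_bound k Hw.
rewrite /powR gt_eqF // ler_expR.
have r0 : 0 <= (n%:R + 1) / 2 :> R by apply: divr_ge0 => //; apply: addr_ge0.
apply: le_trans (ler_norm _) _; rewrite normrM normrN (ger0_norm r0).
exact: ler_wpM2l hl.
Qed.

Lemma coord_bound w : inT w ->
  \prod_(c : gtcoord N n) (1 + w c ^+ 2) <= (1 + Mw X w ^+ 2) ^+ #|{: gtcoord N n}|.
Proof.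
move=> Hw; rewrite -prodr_const; apply: ler_prod => c _.
rewrite addr_ge0 ?sqr_ge0 //= lerD2l.
have [h1 _ _] := Y_bound c.1 Hw.
have h : `|w c| <= Mw X w.
  rewrite Ymat_coord; apply: le_trans h1; apply: entry_le_tr.
  exact: pd_psd (Hw c.1).
rewrite -real_normK ?num_real //; apply: lerXn2r => //; rewrite nnegrE //.
by apply: le_trans (normr_ge0 _) h.
Qed.

Lemma energy_ge0 w : inT w -> 0 <= energy X w.
Proof.
move=> Hw; rewrite /energy big_seq; apply: sumr_ge0 => m.
rewrite mem_index_iota => /andP[m0 mN].
rewrite big_seq; apply: sumr_ge0 => i; rewrite mem_index_iota => /andP[i0 im].
have [h1 h2] := t_ge0 pdX Hw i0 (im : (i <= m)%N) mN.
exact: addr_ge0.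
Qed.

Lemma gt_norm w : normc (gt_integrand X lam w) =
  normc (e_lambda X lam w) * expR (- energy X w).
Proof. by rewrite /gt_integrand ComplexField.Normc.normcM normc_real ?expR_ge0. Qed.

Lemma lnMw w : ln (Mw X w) = ln (C0 X) + N%:R * ln (Gw X w).
Proof.
have G0 : 0 < Gw X w by apply: lt_le_trans (Gw_ge1 X w).
have C0p : 0 < C0 X by apply: lt_le_trans (C0_ge1 pdX).
by rewrite /Mw lnM ?posrE ?exprn_gt0 // lnXn // mulr_natl.
Qed.


Lemma Lw_eq w : Lw w = (ln (@Kn R n) + n%:R * ln (C0 X)) + (n%:R * N%:R) * ln (Gw X w).
Proof. by rewrite /Lw lnMw; ring. Qed.

Lemma bound_A : (0 < N)%N -> exists g : R, forall w, inT w ->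
  normc (gt_integrand X lam w) <= expR (g - energy X w / 2).
Proof.
move=> N0.
set al := Qn%:R * Rl * (ln (@Kn R n) + n%:R * ln (C0 X)).
set be := Qn%:R * Rl * (n%:R * N%:R).
have be0 : 0 <= be by rewrite /be !mulr_ge0 ?Rl_ge0.
exists (al + 1 / 2 + (be + 1) * ln (2 * (be + 1))) => w Hw.
have F0 := energy_ge0 Hw.
apply: le_trans (exp_tail al be0 F0).
rewrite gt_norm.
apply: le_trans (_ : Ew w ^+ Qn * expR (- energy X w) <= _).
  by apply: ler_wpM2r; [exact: expR_ge0 | exact: e_lambda_bound].
rewrite /Ew -expRM_natl -expRD ler_expR Lw_eq /al /be /Gw; rewrite le_eqVlt; apply/orP; left; apply/eqP; ring.
Qed.

Lemma bound_B : (0 < N)%N -> exists g : R, forall w, inT w ->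
  abs_integrand X lam w * \prod_(c : gtcoord N n) (1 + w c ^+ 2) <=
  expR (g - energy X w / 2).
Proof.
move=> N0.
set r : R := (n%:R + 1) / 2.
set Kk : R := #|{: LvIdx N}|%:R.
set Kc : R := #|{: gtcoord N n}|%:R.
set a0 := ln (@Kn R n) + n%:R * ln (C0 X).
set al := (Qn%:R * Rl + Kk * r) * a0 + Kc * (ln 2 + 2 * ln (C0 X)).
set be := (Qn%:R * Rl + Kk * r) * (n%:R * N%:R) + Kc * (2 * N%:R).
have r0 : 0 <= r by rewrite /r divr_ge0 // addr_ge0.
have be0 : 0 <= be.
  by rewrite /be addr_ge0 // !mulr_ge0 ?addr_ge0 ?mulr_ge0 ?Rl_ge0.
exists (al + 1 / 2 + (be + 1) * ln (2 * (be + 1))) => w Hw.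
have F0 := energy_ge0 Hw.
apply: le_trans (exp_tail al be0 F0).
rewrite /abs_integrand asboolT // gt_norm.
have M1 := Mw_ge1 pdX w.
have M0 : 0 < Mw X w by apply: lt_le_trans M1.
have hM : 1 + Mw X w ^+ 2 <= expR (ln 2 + 2 * ln (Mw X w)).
  rewrite expRD mulrC expRM_natl lnK ?posrE // lnK ?posrE //.
  have : 1 <= Mw X w ^+ 2 by rewrite exprn_ege1.
  lra.
apply: le_trans (_ : expR (Qn%:R * (Rl * Lw w)) * expR (- energy X w) *
   expR (r * Lw w) ^+ #|{: LvIdx N}| *
   expR (ln 2 + 2 * ln (Mw X w)) ^+ #|{: gtcoord N n}| <= _).
  apply: ler_pM.
  - by apply: mulr_ge0; [apply: mulr_ge0; [exact: normc_ge0 | exact: expR_ge0] |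
      apply: prodr_ge0 => k _; exact: powR_ge0].
  - by apply: prodr_ge0 => c _; apply: addr_ge0 => //; exact: sqr_ge0.
  - apply: ler_pM.
    + by apply: mulr_ge0; [exact: normc_ge0 | exact: expR_ge0].
    + by apply: prodr_ge0 => k _; exact: powR_ge0.
    + apply: ler_wpM2r; first exact: expR_ge0.
      by rewrite expRM_natl; exact: e_lambda_bound.
    + exact: density_bound.
  - apply: le_trans (coord_bound Hw) _.
    by apply: lerXn2r; rewrite ?nnegrE ?addr_ge0 ?sqr_ge0 ?expR_ge0.
rewrite -!expRM_natl -!expRD ler_expR lnMw Lw_eq /al /be /a0 /Kk /Kc /Gw.
rewrite le_eqVlt; apply/orP; left; apply/eqP; ring.
Qed.

End Bnd.


Local Open Scope classical_set_scope.

Section Part2.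
Variable R : realType.
Variables (N n : nat).

Lemma cont_proj (c : gtcoord N n) : continuous (fun w : gtspace R N n => w c).
Proof. exact (@proj_continuous _ (fun _ => (R : topologicalType)) c). Qed.

Lemma cont_sum (T : topologicalType) (I : Type) (r : seq I) (F : I -> T -> R) :
  (forall i, continuous (F i)) -> continuous (fun x => \sum_(i <- r) F i x).
Proof.
move=> hF; elim: r => [|a r IH].
  by under eq_fun do rewrite big_nil; exact: cst_continuous.
under eq_fun do rewrite big_cons.
by move=> x; apply: continuousD; [exact: hF | exact: IH].
Qed.

Lemma cont_bil k (x : 'rV[R]_n) :
  continuous (fun w : gtspace R N n => bil (Ymat w k) x x).
Proof.
have -> : (fun w : gtspace R N n => bil (Ymat w k) x x) =
  (fun w => \sum_(j <- enum 'I_n) \sum_(i <- enum 'I_n) (x 0 i * x 0 j) * w (k, sidx i j)).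
  apply: funext => w; rewrite /bil mxE big_enum /=; apply: eq_bigr => j _.
  rewrite mxE big_enum /= mulr_suml; apply: eq_bigr => i _; rewrite !mxE; ring.
apply: cont_sum => j; apply: cont_sum => i z.
apply: (@continuousM _ _ (cst (x 0 i * x 0 j)) (fun w : gtspace R N n => w (k, sidx i j)) z).
  exact: cst_continuous.
exact: cont_proj.
Qed.

Definition Kset (M : R) : set (gtspace R N n) :=
  (\bigcap_(c in setT) [set w : gtspace R N n | `|w c| <= M]) `&`
  (\bigcap_(k in setT) \bigcap_(x in setT)
     [set w : gtspace R N n | nrm2 x <= M * bil (Ymat w k) x x]).

Lemma Kset_closed M : closed (Kset M).
Proof.
apply: closedI; apply: closed_bigI => c _.
  have : continuous (fun w : gtspace R N n => `|w c|).
    by move=> w; apply: continuous_comp; [exact: cont_proj | exact: norm_continuous].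
  by move/continuous_closedP/(_ _ (@closed_le _ M)).
apply: closed_bigI => x _.
have : continuous (fun w : gtspace R N n => M * bil (Ymat w c) x x).
  move=> w; apply: (@continuousM _ _ (cst M) (fun w : gtspace R N n => bil (Ymat w c) x x) w).
    exact: cst_continuous.
  exact: cont_bil.
by move/continuous_closedP/(_ _ (@closed_ge _ (nrm2 x))).
Qed.

Lemma Kset_compact M : compact (Kset M).
Proof.
have hb : compact [set w : gtspace R N n | forall c, `[-M, M] (w c)].
  exact (@tychonoff _ (fun _ => (R : topologicalType)) (fun _ => `[-M, M])
     (fun _ => @segment_compact R (-M) M)).
apply: (subclosed_compact (@Kset_closed M) hb).
move=> w [Hc _] c /=; have := Hc c I; rewrite /= in_itv /=.
by move/ler_normlP => [h1 h2]; rewrite h2 andbT lerNl.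
Qed.

Lemma nrm2_gt0 (x : 'rV[R]_n) : x != 0 -> 0 < nrm2 x.
Proof.
move=> xn; rewrite lt_def nrm2_ge0 andbT; apply: contraNneq xn.
rewrite nrm2_sum => /eqP; rewrite psumr_eq0 => [/allP h|i _]; last exact: sqr_ge0.
apply/eqP/matrixP => i j; rewrite ord1 !mxE.
by have := h j (mem_index_enum j); rewrite sqrf_eq0 => /eqP.
Qed.

Lemma Kset_inT M : 0 < M -> Kset M `<=` [set w | inT w].
Proof.
move=> M0 w [_ Hk] k; split; first exact: Ymat_sym.
move=> x xn; have := Hk k I x I; rewrite /=.
have := nrm2_gt0 xn => h1 h2.
have : 0 < M * bil (Ymat w k) x x by apply: lt_le_trans h2.
by rewrite pmulr_rgt0.
Qed.


Variable X : 'I_N -> 'M[R]_n.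
Variable lam : 'I_N -> R[i].
Hypothesis pdX : forall j, posdef (X j).

Lemma small_G_in_K w H : inT w -> 1 <= H -> Gw X w <= H -> Kset (C0 X * H ^+ N) w.
Proof.
move=> Hw H1 GH.
have MM : Mw X w <= C0 X * H ^+ N.
  apply: ler_wpM2l; first by apply: le_trans (C0_ge1 pdX).
  apply: lerXn2r; rewrite ?nnegrE //; last by apply: le_trans H1.
  by apply: le_trans (Gw_ge1 X w).
split => [c _ | k _ x _] /=.
  have [h1 _ _] := Y_bound pdX c.1 Hw.
  rewrite Ymat_coord; apply: le_trans MM; apply: le_trans h1.
  exact: entry_le_tr (pd_psd (Hw c.1)).
have [_ h2 _] := Y_bound pdX k Hw.
have pY := Hw k.
have uY : invmx (Ymat w k) \in unitmx by rewrite unitmx_inv; exact: pd_unit.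
have := keyquad x (psd_inv (pd_psd pY) (pd_unit pY)) uY.
rewrite invmxK => h; apply: le_trans h _.
apply: ler_wpM2r; first by case: (pd_psd pY).
exact: le_trans h2 MM.
Qed.

Lemma Kset_N0 M w : N = 0%N -> Kset M w.
Proof.
move=> N0; split => [c _|k _ x _].
  case: c => [[[a b] hk] e]; exfalso; have := ltn_ord a.
  by move: (nat_of_ord a) => m; rewrite N0.
case: k => [[a b] hk]; exfalso; have := ltn_ord a.
by move: (nat_of_ord a) => m; rewrite N0.
Qed.

Lemma part2 (eps : R) : 0 < eps ->
  exists K : set (gtspace R N n),
    [/\ compact K, K `<=` [set w | inT w] &
        forall w, inT w -> ~ K w ->
          ComplexField.Normc.normc (gt_integrand X lam w) < eps].
Proof.
move=> e0; case: (posnP N) => [N0|Npos].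
  exists (Kset 1); split; [exact: Kset_compact | exact: Kset_inT |].
  by move=> w _ []; apply: Kset_N0.
have [g hg] := bound_A lam pdX Npos.
set H := 1 + Num.max 0 (2 * (g - ln eps)).
have H1 : 1 <= H by rewrite /H lerDl le_max lexx.
have Mp : 0 < C0 X * H ^+ N.
  apply: mulr_gt0; first by apply: lt_le_trans (C0_ge1 pdX).
  by apply: exprn_gt0; apply: lt_le_trans H1.
exists (Kset (C0 X * H ^+ N)); split; [exact: Kset_compact | exact: Kset_inT |].
move=> w Hw nK.
have GH : H < Gw X w.
  by rewrite ltNge; apply/negP => GH; apply: nK; apply: small_G_in_K.
have FH : H < energy X w.
  move: GH; rewrite /Gw lt_max => /orP[|//].
  by move=> h; move: (le_lt_trans H1 h); rewrite ltxx.
apply: le_lt_trans (hg w Hw) _.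
rewrite -[X in _ < X](lnK (x := eps)) ?posrE // ltr_expR.
have : 2 * (g - ln eps) <= Num.max 0 (2 * (g - ln eps)) by rewrite le_max lexx orbT.
rewrite -/H in FH *.
have : H = 1 + Num.max 0 (2 * (g - ln eps)) by [].
lra.
Qed.

End Part2.

Local Close Scope classical_set_scope.


Local Open Scope classical_set_scope.

Section Integ.
Variable R : realType.
Local Notation mu := (@lebesgue_measure R).

Lemma le_integral_nm (f g : R -> \bar R) : (forall x, (f x <= g x)%E) ->
  (\int[mu]_(x in [set: R]) f x <= \int[mu]_(x in [set: R]) g x)%E.
Proof.
move=> fg; rewrite /integral !patch_setT; apply: leeB.
  apply: le_ereal_sup => _ [h hf <-]; exists h => //= x.
  by apply: le_trans (hf x) _; apply: (@funepos_le _ _ setT) => //; rewrite in_setT.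
apply: le_ereal_sup => _ [h hf <-]; exists h => //= x.
by apply: le_trans (hf x) _; apply: (@funeneg_le _ _ setT) => //; rewrite in_setT.
Qed.

Lemma iterint_le (J : eqType) (s : seq J) (f g : (J -> R) -> \bar R) :
  (forall v, (f v <= g v)%E) -> forall v, (iterint s f v <= iterint s g v)%E.
Proof.
move=> fg; elim: s => [|j s IH] v //=.
by apply: le_integral_nm => x; apply: IH.
Qed.

Definition hh (x : R) := (1 + x ^+ 2)^-1.

Lemma hh_ge0 x : 0 <= hh x.
Proof. by rewrite /hh invr_ge0 addr_ge0 // sqr_ge0. Qed.

Lemma hh_cont : continuous hh.
Proof.
exact: continuous_oneDsqrV.
Qed.

Lemma hh_meas : measurable_fun [set: R] (EFin \o hh).
Proof. by apply/measurable_EFinP; apply: continuous_measurable_fun; exact: hh_cont. Qed.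

Lemma hh_int : (\int[mu]_(x in [set: R]) (hh x)%:E = pi%:E)%E.
Proof.
rewrite ge0_symfun_integralT //; first last.
- by move=> x; rewrite /hh /= sqrrN.
- exact: hh_cont.
- exact: hh_ge0.
have -> : [set x : R | 0 <= x] = `[0, +oo[%classic.
  by apply/seteqP; split => x /=; rewrite in_itv /= andbT.
have := integral0y_oneDsqr R.
rewrite /oneDsqr /hh => ->.
by rewrite -EFinM; congr EFin; field.
Qed.

Lemma iterint_prod (J : finType) (s : seq J) (C : R) :
  0 <= C -> uniq s ->
  forall v, iterint s (fun v => (C * \prod_(c : J) hh (v c))%:E) v =
   (C * pi ^+ size s * \prod_(c | c \notin s) hh (v c))%:E.
Proof.
move=> C0; elim: s => [|j s IH] /=.
  by move=> _ v; rewrite expr0 mulr1; congr EFin; congr (_ * _); apply: eq_bigl.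
move=> /andP[js us] v.
under eq_integral do rewrite IH //.
set K := C * pi ^+ size s * \prod_(c | c \notin j :: s) hh (v c).
have K0 : 0 <= K.
  rewrite /K !mulr_ge0 ?exprn_ge0 ?pi_ge0 //; apply: prodr_ge0 => c _; exact: hh_ge0.
transitivity (\int[mu]_(x in [set: R]) (K%:E * (hh x)%:E))%E.
  apply: eq_integral => x _; rewrite -EFinM; congr EFin.
  rewrite (bigD1 j) /=; last by rewrite js.
  rewrite eqxx.
  have -> : \prod_(i | (i \notin s) && (i != j)) hh (if i == j then x else v i) =
            \prod_(c | c \notin j :: s) hh (v c).
    apply: eq_big => [c|c /andP[_ cj]]; last by rewrite (negbTE cj).
    by rewrite inE negb_or andbC eq_sym.
  by rewrite /K; ring.
rewrite ge0_integralZl_EFin //; first last.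
- exact: hh_meas.
- by move=> x _; rewrite lee_fin hh_ge0.
by rewrite hh_int -EFinM; congr EFin; rewrite /K exprS; ring.
Qed.

End Integ.

Local Close Scope classical_set_scope.


Local Open Scope classical_set_scope.

Section Final.
Variable R : realType.
Variables (N n : nat).
Variable X : 'I_N -> 'M[R]_n.
Variable lam : 'I_N -> R[i].
Hypothesis pdX : forall j, posdef (X j).

Lemma abs_ge0 w : 0 <= abs_integrand X lam w.
Proof.
rewrite /abs_integrand; case: ifP => // _.
apply: mulr_ge0; first exact: normc_ge0.
by apply: prodr_ge0 => k _; exact: powR_ge0.
Qed.

Lemma part1 : (lebesgue_integral_fin (fun w : gtcoord N n -> R =>
       (abs_integrand X lam w)%:E) < +oo)%E.
Proof.
case: (posnP N) => [N0|Npos].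
  rewrite /lebesgue_integral_fin; case: (enum _) => [|c l]; first by rewrite /= ltry.
  case: c => [[[a b] hk] e]; exfalso; have := ltn_ord a.
  by move: (nat_of_ord a) => m; rewrite N0.
have [g hg] := bound_B lam pdX Npos.
set C := expR g.
have C0 : 0 <= C by exact: expR_ge0.
have dom : forall w : gtcoord N n -> R,
    ((abs_integrand X lam w)%:E <= (C * \prod_(c : gtcoord N n) hh (w c))%:E)%E.
  move=> w; rewrite lee_fin.
  have P0 : 0 < \prod_(c : gtcoord N n) (1 + w c ^+ 2).
    by apply: prodr_gt0 => c _; have := sqr_ge0 (w c); lra.
  have -> : \prod_(c : gtcoord N n) hh (w c) = (\prod_(c : gtcoord N n) (1 + w c ^+ 2))^-1.
    by rewrite prodfV.
  have [Hw|Hw] := asboolP (inT w); last first.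
    rewrite /abs_integrand asboolF //; apply: mulr_ge0 => //.
    by rewrite invr_ge0 ltW.
  rewrite ler_pdivlMr //.
  apply: le_trans (hg w Hw) _; rewrite /C ler_expR gerBl.
  by apply: divr_ge0 => //; apply: energy_ge0.
apply: le_lt_trans (iterint_le _ dom _) _.
by rewrite iterint_prod ?enum_uniq // ltry.
Qed.

End Final.

Local Close Scope classical_set_scope.


Unset Implicit Arguments.
Local Open Scope classical_set_scope.

Theorem proposition7p1 (R : realType) (N n : nat)
    (X : 'I_N -> 'M[R]_n) (lam : 'I_N -> R[i]) :
  (forall j : 'I_N, posdef (X j)) ->
  (* (i) the integral defining psi_lambda(X) converges (absolutely) *)
  (lebesgue_integral_fin (fun w : gtcoord N n -> R =>
       (abs_integrand X lam w)%:E) < +oo)%E /\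
  (* (ii) the integrand vanishes as Y -> boundary of T(X) *)
  (forall eps : R, 0 < eps ->
     exists K : set (gtspace R N n),
       [/\ compact K, K `<=` [set w | inT w] &
           forall w, inT w -> ~ K w ->
             ComplexField.Normc.normc (gt_integrand X lam w) < eps]).
Proof.
move=> pdX; split; first exact: part1.
by move=> eps e0; exact: part2.
Qed.
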